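(* If the weight state tends to a time state, $\hat \rho_W \to |t\rangle\langle t|_W$, then $\hat \sigma_S \to e^{-i\hat H_S t} \hat \rho_S e^{i\hat H_S t}$ and the locked energy $\Delta_L \to 0$. If instead the weight tends to an energy eigenstate, $\hat \rho_W \to |\varepsilon\rangle\langle \varepsilon|_W$, then $\hat \sigma_S \to D[\hat \rho_S]$ (dephasing in the energy basis of $\hat H_S$) and $\Delta_L$ is maximal.
   Context: System $S$ (Hamiltonian $\hat H_S$), heat bath in Gibbs state $\hat\tau_B$ (Hamiltonian $\hat H_B$), weight $W$ with continuous energy eigenstates $|\varepsilon\rangle_W$ and time states $|t\rangle_W = \int d\varepsilon\, e^{i\varepsilon t}|\varepsilon\rangle_W$. The control-marginal state is $\hat \sigma_S = \int dt\, p(t)\, e^{-i\hat H_S t}\hat\rho_S e^{i\hat H_S t}$ with $p(t)=\mathrm{Tr}[\hat\rho_W |t\rangle\langle t|_W]$. Ergotropy: $R(\hat\rho)=\max_{\hat U}\mathrm{Tr}[(\hat H-\hat U^\dagger\hat H\hat U)\hat\rho]$ with $\hat H=\hat H_S+\hat H_B$. Locked energy: $\Delta_L(\hat\rho_S,\hat\rho_W,\hat\tau_B) = R(\hat\rho_S\otimes\hat\tau_B) - R(\hat\sigma_S\otimes\hat\tau_B)\ge 0$; the optimal work extractable into the weight by energy-conserving, translationally invariant unitaries is $R(\hat\sigma_S\otimes\hat\tau_B)$. *)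

(* Defs.v *)
From mathcomp Require Import all_boot all_order all_algebra.
From mathcomp Require Import all_classical all_reals all_analysis.
From mathcomp.real_closed Require Import complex mxtens.

Set Implicit Arguments.
Unset Strict Implicit.
Unset Printing Implicit Defensive.

Import Order.TTheory GRing.Theory Num.Theory.
Import numFieldNormedType.Exports.
Local Open Scope ring_scope.
Local Open Scope classical_set_scope.

Section QDefs.
Variable R : realType.
Local Notation C := R[i].

Definition dagger {p q : nat} (A : 'M[C]_(p, q)) : 'M[C]_(q, p) :=
  (map_mx (fun z : C => z^*%C) A)^T.

Definition qunitary {p : nat} (U : 'M[C]_p) : Prop := dagger U *m U = 1%:M.

Definition psd {p : nat} (A : 'M[C]_p) : Prop :=
  forall v : 'cV[C]_p, 0 <= (dagger v *m A *m v) 0 0.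
Definition density {p : nat} (A : 'M[C]_p) : Prop := psd A /\ \tr A = 1.

Definition expiR (x : R) : C := (cos x +i* sin x)%C.

Definition specH {p : nat} (U : 'M[C]_p) (E : 'I_p -> R) : 'M[C]_p :=
  U *m diag_mx (\row_a (E a)%:C%C) *m dagger U.

Definition evol {p : nat} (U : 'M[C]_p) (E : 'I_p -> R) (t : R) : 'M[C]_p :=
  U *m diag_mx (\row_a expiR (- (E a * t))) *m dagger U.

Definition rotH {p : nat} (U : 'M[C]_p) (E : 'I_p -> R) (t : R)
  (rho : 'M[C]_p) : 'M[C]_p :=
  evol U E t *m rho *m dagger (evol U E t).

(* dephasing D[rho] in the energy eigenbasis of H = specH U E:
   sum over eigenvalues lambda of P_lambda rho P_lambda *)
Definition dephase {p : nat} (U : 'M[C]_p) (E : 'I_p -> R) (rho : 'M[C]_p)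
  : 'M[C]_p :=
  U *m (\matrix_(a, b) (if E a == E b then (dagger U *m rho *m U) a b else 0))
    *m dagger U.

Definition gibbs {q : nat} (V : 'M[C]_q) (F : 'I_q -> R) (beta : R)
  : 'M[C]_q :=
  V *m diag_mx (\row_b (expR (- (beta * F b)) /
                        (\sum_(c < q) expR (- (beta * F c))))%:C%C)
    *m dagger V.

Definition totalH {p q : nat} (HS : 'M[C]_p) (HB : 'M[C]_q) : 'M[C]_(p * q) :=
  HS *t (1%:M : 'M[C]_q) + (1%:M : 'M[C]_p) *t HB.

Definition ergotropy {N : nat} (H X : 'M[C]_N) : R :=
  sup [set x : R | exists W : 'M[C]_N,
        qunitary W /\ x = complex.Re (\tr ((H - dagger W *m H *m W) *m X))].

(* control-marginal state sigma_S = \int dt p(t) e^{-iH_S t} rho_S e^{iH_S t},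
   with p the time distribution of the weight, a probability measure on R *)
Definition sigmaS {p : nat} (U : 'M[C]_p) (E : 'I_p -> R) (rho : 'M[C]_p)
  (P : probability R R) : 'M[C]_p :=
  \matrix_(j, k)
    ((\int[P]_t complex.Re (rotH U E t rho j k))
      +i* (\int[P]_t complex.Im (rotH U E t rho j k)))%C.

Definition lockedE {p q : nat} (HS : 'M[C]_p) (U : 'M[C]_p) (E : 'I_p -> R)
  (HB : 'M[C]_q) (tau : 'M[C]_q) (rho : 'M[C]_p) (P : probability R R) : R :=
  ergotropy (totalH HS HB) (rho *t tau)
  - ergotropy (totalH HS HB) (sigmaS U E rho P *t tau).

Definition mx_cvg {p q : nat} (A : nat -> 'M[C]_(p, q)) (B : 'M[C]_(p, q))
  : Prop :=
  forall i j,
    (complex.Re (A k i j) @[k --> \oo] --> complex.Re (B i j)) /\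
    (complex.Im (A k i j) @[k --> \oo] --> complex.Im (B i j)).

(* the weight tends to the time state |t0><t0| : its time distribution
   converges weakly (in distribution) to the Dirac mass at t0 *)
Definition tends_to_time_state (P : nat -> probability R R) (t0 : R) : Prop :=
  forall f : R -> R, continuous f -> (exists M : R, forall x, `|f x| <= M) ->
    (\int[P k]_t f t) @[k --> \oo] --> f t0.

(* the weight tends to an energy eigenstate |eps><eps| : all energy
   coherences <eps+w|rho_W|eps> (w <> 0) vanish, i.e. the characteristic
   function of the time distribution vanishes at every nonzero frequency *)
Definition tends_to_energy_state (P : nat -> probability R R) : Prop :=
  forall w : R, w != 0 ->
    ((\int[P k]_t cos (w * t)) @[k --> \oo] --> 0) /\
    ((\int[P k]_t sin (w * t)) @[k --> \oo] --> 0).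

End QDefs.

(* Main.v *)
Set Warnings "-all".
Set Implicit Arguments.
Unset Strict Implicit.
Require Import Defs.
From mathcomp Require Import all_boot all_order all_algebra.
From mathcomp Require Import all_classical all_reals all_analysis.
From mathcomp.real_closed Require Import complex mxtens.
From mathcomp Require Import ring lra measurable_realfun.
Import Order.TTheory GRing.Theory Num.Theory.
Import numFieldNormedType.Exports.
Local Open Scope ring_scope.
Local Open Scope classical_set_scope.

Section Basics.
Variable R : realType.
Local Notation C := R[i].

Lemma ReD (x y : C) : complex.Re (x + y) = complex.Re x + complex.Re y.
Proof. by case: x; case: y. Qed.
Lemma ImD (x y : C) : complex.Im (x + y) = complex.Im x + complex.Im y.
Proof. by case: x; case: y. Qed.
Lemma ReN (x : C) : complex.Re (- x) = - complex.Re x.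
Proof. by case: x. Qed.
Lemma ImN (x : C) : complex.Im (- x) = - complex.Im x.
Proof. by case: x. Qed.
Lemma ReB (x y : C) : complex.Re (x - y) = complex.Re x - complex.Re y.
Proof. by rewrite ReD ReN. Qed.
Lemma ImB (x y : C) : complex.Im (x - y) = complex.Im x - complex.Im y.
Proof. by rewrite ImD ImN. Qed.
Lemma ReM (x y : C) : complex.Re (x * y) =
  complex.Re x * complex.Re y - complex.Im x * complex.Im y.
Proof. by case: x => a b; case: y => c d. Qed.
Lemma ImM (x y : C) : complex.Im (x * y) =
  complex.Re x * complex.Im y + complex.Im x * complex.Re y.
Proof. by case: x => a b; case: y => c d. Qed.
Lemma Re0 : complex.Re (0 : C) = 0. Proof. by []. Qed.
Lemma Im0 : complex.Im (0 : C) = 0. Proof. by []. Qed.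
Lemma Re1 : complex.Re (1 : C) = 1. Proof. by []. Qed.
Lemma Im1 : complex.Im (1 : C) = 0. Proof. by []. Qed.
Lemma ReJ (x : C) : complex.Re (x^*)%C = complex.Re x. Proof. by case: x. Qed.
Lemma ImJ (x : C) : complex.Im (x^*)%C = - complex.Im x. Proof. by case: x. Qed.
Lemma Re_sum (I : Type) (r : seq I) (P : pred I) (F : I -> C) :
  complex.Re (\sum_(i <- r | P i) F i) = \sum_(i <- r | P i) complex.Re (F i).
Proof. by apply: (big_morph _ ReD Re0). Qed.
Lemma Im_sum (I : Type) (r : seq I) (P : pred I) (F : I -> C) :
  complex.Im (\sum_(i <- r | P i) F i) = \sum_(i <- r | P i) complex.Im (F i).
Proof. by apply: (big_morph _ ImD Im0). Qed.
Lemma ReRC (a : R) (x : C) : complex.Re (a%:C%C * x) = a * complex.Re x.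
Proof. by rewrite ReM /= mul0r subr0. Qed.
Lemma ImRC (a : R) (x : C) : complex.Im (a%:C%C * x) = a * complex.Im x.
Proof. by rewrite ImM /= mul0r addr0. Qed.

Lemma expiR_add x y : expiR x * expiR y = expiR (x + y) :> C.
Proof.
rewrite /expiR cosD sinD; apply/eqP; rewrite eq_complex /=.
apply/andP; split; apply/eqP; ring.
Qed.
Lemma expiR_conj x : (expiR x)^*%C = expiR (- x) :> C.
Proof. by rewrite /expiR cosN sinN. Qed.
Lemma expiR_norm x : (expiR x)^*%C * expiR x = 1 :> C.
Proof. by rewrite expiR_conj expiR_add addNr /expiR cos0 sin0. Qed.
Lemma Re_expiR x : complex.Re (expiR x : C) = cos x. Proof. by []. Qed.
Lemma Im_expiR x : complex.Im (expiR x : C) = sin x. Proof. by []. Qed.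

Lemma dagger_mul p q r (A : 'M[C]_(p, q)) (B : 'M[C]_(q, r)) :
  dagger (A *m B) = dagger B *m dagger A.
Proof. by rewrite /dagger map_mxM trmx_mul. Qed.
Lemma daggerK p q (A : 'M[C]_(p, q)) : dagger (dagger A) = A.
Proof.
apply/matrixP => i j; by rewrite /dagger !mxE conjcK.
Qed.
Lemma dagger1 p : dagger (1%:M : 'M[C]_p) = 1%:M.
Proof.
apply/matrixP => i j; rewrite /dagger !mxE eq_sym.
by rewrite conjc_nat.
Qed.
Lemma daggerD p q (A B : 'M[C]_(p, q)) : dagger (A + B) = dagger A + dagger B.
Proof. by apply/matrixP => i j; rewrite /dagger !mxE rmorphD. Qed.
Lemma dagger_diag p (d : 'I_p -> C) :
  dagger (diag_mx (\row_a d a)) = diag_mx (\row_a (d a)^*%C).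
Proof.
apply/matrixP => i j; rewrite /dagger !mxE rmorphMn eq_sym.
by case: eqP => [->|].
Qed.
Lemma dagger_tens p q r s (A : 'M[C]_(p, q)) (B : 'M[C]_(r, s)) :
  dagger (A *t B) = dagger A *t dagger B.
Proof. by rewrite /dagger map_mxT trmx_tens. Qed.

Lemma tens11 p q : (1%:M : 'M[C]_p) *t (1%:M : 'M[C]_q) = 1%:M.
Proof.
apply/matrixP => i j.
case: (mxtens_indexP i) => i1 i2; case: (mxtens_indexP j) => j1 j2.
rewrite tensmxE !mxE (can_eq (@mxtens_indexK _ _)) xpair_eqE.
by case: (i1 == j1); case: (i2 == j2); rewrite /= ?mulr1 ?mulr0.
Qed.

Lemma tensDl p q r s (A B : 'M[C]_(p, q)) (T : 'M[C]_(r, s)) :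
  (A + B) *t T = A *t T + B *t T.
Proof. by apply/matrixP => i j; rewrite !mxE mulrDl. Qed.
Lemma tensZl p q r s (a : C) (A : 'M[C]_(p, q)) (T : 'M[C]_(r, s)) :
  (a *: A) *t T = a *: (A *t T).
Proof. by apply/matrixP => i j; rewrite !mxE mulrA. Qed.

Lemma unitary_sym p (W : 'M[C]_p) : qunitary W -> W *m dagger W = 1%:M.
Proof. by move=> h; apply: mulmx1C. Qed.

End Basics.

Section Kmx.
Variable R : realType.
Local Notation C := R[i].
Variables (n : nat) (U : 'M[C]_n) (E : 'I_n -> R) (rho : 'M[C]_n).
Hypothesis UdU : qunitary U.

Let UUd : U *m dagger U = 1%:M. Proof. exact: unitary_sym. Qed.

Definition Dg (s : 'I_n -> C) : 'M[C]_n := U *m diag_mx (\row_a s a) *m dagger U.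
Definition Mr : 'M[C]_n := dagger U *m rho *m U.
Definition Kmx (c : 'I_n -> 'I_n -> C) : 'M[C]_n :=
  U *m (\matrix_(a, b) (Mr a b * c a b)) *m dagger U.

Lemma Dg_dagger s : dagger (Dg s) = Dg (fun a => (s a)^*%C).
Proof. by rewrite /Dg !dagger_mul daggerK dagger_diag mulmxA. Qed.

Lemma Dg_mul s t : Dg s *m Dg t = Dg (fun a => s a * t a).
Proof.
rewrite /Dg -!mulmxA (mulmxA (dagger U) U) UdU mul1mx.
rewrite [diag_mx _ *m (diag_mx _ *m _)]mulmxA mulmx_diag.
by congr (_ *m (diag_mx _ *m _)); apply/matrixP => i j; rewrite !mxE.
Qed.

Lemma Dg1 : Dg (fun _ => 1) = 1%:M.
Proof.
rewrite /Dg (_ : diag_mx _ = 1%:M) ?mulmx1 //.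
by apply/matrixP => i j; rewrite !mxE.
Qed.

Lemma Dg_unitary s : (forall a, (s a)^*%C * s a = 1) -> qunitary (Dg s).
Proof.
move=> h; rewrite /qunitary Dg_dagger Dg_mul -Dg1; congr Dg.
by apply: funext => a; rewrite h.
Qed.

Lemma Kmx_entry c j k :
  Kmx c j k = \sum_b \sum_a (U j a * Mr a b * dagger U b k) * c a b.
Proof.
rewrite /Kmx mxE; apply: eq_bigr => b _; rewrite mxE mulr_suml.
by apply: eq_bigr => a _; rewrite mxE; ring.
Qed.

Lemma Dg_conj s c :
  Dg s *m Kmx c *m dagger (Dg s) = Kmx (fun a b => s a * c a b * (s b)^*%C).
Proof.
rewrite Dg_dagger /Dg /Kmx -!mulmxA (mulmxA (dagger U) U) UdU mul1mx.
rewrite !mulmxA -(mulmxA _ (dagger U) U) UdU mulmx1.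
rewrite -(mulmxA U (diag_mx _)) -(mulmxA U) mul_diag_mx mul_mx_diag.
by congr (_ *m _ *m _); apply/matrixP => a b; rewrite !mxE; ring.
Qed.

Lemma Kmx_rho : Kmx (fun _ _ => 1) = rho.
Proof.
rewrite /Kmx (_ : \matrix_(a, b) _ = Mr); last first.
  by apply/matrixP => a b; rewrite !mxE mulr1.
by rewrite /Mr !mulmxA UUd mul1mx -mulmxA UUd mulmx1.
Qed.

Lemma Kmx_mid c1 c2 :
  (2^-1)%:C%C *: (Kmx c1 + Kmx c2) =
  Kmx (fun a b => (2^-1)%:C%C * (c1 a b + c2 a b)).
Proof.
apply/matrixP => j k; rewrite [LHS]mxE [X in _ * X = _]mxE !Kmx_entry -big_split mulr_sumr /=.
apply: eq_bigr => b _; rewrite -big_split mulr_sumr; apply: eq_bigr => a _.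
by rewrite /=; ring.
Qed.

Lemma rotH_Kmx t : rotH U E t rho = Kmx (fun a b => expiR ((E b - E a) * t)).
Proof.
rewrite /rotH (_ : evol U E t = Dg (fun a => expiR (- (E a * t)))) //.
rewrite -[in X in X *m dagger _]Kmx_rho Dg_conj; congr Kmx.
apply: funext => a; apply: funext => b.
by rewrite mulr1 expiR_conj opprK expiR_add; congr expiR; ring.
Qed.

Lemma dephase_Kmx : dephase U E rho = Kmx (fun a b => if E a == E b then 1 else 0).
Proof.
rewrite /dephase /Kmx; congr (_ *m _ *m _); apply/matrixP => a b; rewrite !mxE.
by case: ifP; rewrite ?mulr1 ?mulr0.
Qed.

Lemma evol_Dg t : evol U E t = Dg (fun a => expiR (- (E a * t))).
Proof. by []. Qed.

Lemma specH_Dg : specH U E = Dg (fun a => (E a)%:C%C). Proof. by []. Qed.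

Lemma Dg_comm s : (forall a, (s a)^*%C * s a = 1) ->
  dagger (Dg s) *m specH U E *m Dg s = specH U E.
Proof.
move=> h; rewrite specH_Dg Dg_dagger !Dg_mul; congr Dg.
by apply: funext => a; rewrite mulrAC h mul1r.
Qed.

End Kmx.

Section Integ.
Variable R : realType.
Local Notation C := R[i].
Variable Q : probability R R.

Definition intg (f : R -> R) := Q.-integrable setT (EFin \o f).

Lemma intg_bounded f : continuous f -> (forall x, `|f x| <= 1) -> intg f.
Proof.
move=> cf bf; apply: (@le_integrable _ _ _ _ _ measurableT _ (EFin \o cst 1)).
- by apply/measurable_EFinP; exact: continuous_measurable_fun.
- by move=> x _ /=; rewrite lee_fin normr1 bf.
- exact: finite_measure_integrable_cst.
Qed.

Lemma intgD f g : intg f -> intg g -> intg (fun t => f t + g t).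
Proof.
move=> hf hg; rewrite /intg (_ : EFin \o _ = (EFin \o f) \+ (EFin \o g))%E.
  exact: integrableD.
by apply: funext => t; rewrite /= EFinD.
Qed.

Lemma intgB f g : intg f -> intg g -> intg (fun t => f t - g t).
Proof.
move=> hf hg; rewrite /intg (_ : EFin \o _ = (fun t => (EFin \o f) t - (EFin \o g) t))%E.
  exact: integrableB.
by apply: funext => t; rewrite /= EFinB.
Qed.

Lemma intgZ a f : intg f -> intg (fun t => a * f t).
Proof.
move=> hf; rewrite /intg (_ : EFin \o _ = (fun t => a%:E * (EFin \o f) t))%E.
  exact: integrableZl.
by apply: funext => t; rewrite /= EFinM.
Qed.

Lemma intg_cst a : intg (fun _ => a).
Proof. exact: finite_measure_integrable_cst. Qed.

Lemma cosw_cont w : continuous (fun t : R => cos (w * t)).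
Proof.
move=> x; apply: (@continuous_comp _ _ _ (fun t => w * t) cos).
  exact: mulrl_continuous.
exact: continuous_cos.
Qed.
Lemma sinw_cont w : continuous (fun t : R => sin (w * t)).
Proof.
move=> x; apply: (@continuous_comp _ _ _ (fun t => w * t) sin).
  exact: mulrl_continuous.
exact: continuous_sin.
Qed.

Lemma intg_cos w : intg (fun t => cos (w * t)).
Proof. by apply: intg_bounded; [exact: cosw_cont | move=> x; exact: cos_max]. Qed.
Lemma intg_sin w : intg (fun t => sin (w * t)).
Proof. by apply: intg_bounded; [exact: sinw_cont | move=> x; exact: sin_max]. Qed.

Lemma Rint_sum (I : Type) (r : seq I) (f : I -> R -> R) :
  (forall i, intg (f i)) ->
  intg (fun t => \sum_(i <- r) f i t) /\
  \int[Q]_t (\sum_(i <- r) f i t) = \sum_(i <- r) \int[Q]_t f i t.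
Proof.
move=> hf; elim: r => [|i r [IHi IHe]].
  rewrite big_nil (_ : (fun t => \sum_(i <- [::]) f i t) = fun _ => 0).
    split; first exact: intg_cst.
    by rewrite Rintegral_cst // mul0r.
  by apply: funext => t; rewrite big_nil.
rewrite big_cons (_ : (fun t => \sum_(j <- i :: r) f j t) =
   fun t => f i t + \sum_(j <- r) f j t); last first.
  by apply: funext => t; rewrite big_cons.
split; first exact: intgD.
by rewrite -IHe; apply: RintegralD => //; exact: hf.
Qed.

Definition ch (w : R) : C :=
  ((\int[Q]_t cos (w * t)) +i* (\int[Q]_t sin (w * t)))%C.

Lemma Rint1 a : \int[Q]_t a = a.
Proof.
have h : Q setT = 1%E := probability_setT Q.
rewrite Rintegral_cst // -[RHS]mulr1; congr (_ * _).
by rewrite -[1]/(fine 1%E); congr fine; exact: h.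
Qed.

Lemma ch0 : ch 0 = 1.
Proof.
rewrite /ch.
under eq_Rintegral do rewrite mul0r cos0.
under [X in (_ +i* X)%C]eq_Rintegral do rewrite mul0r sin0.
by rewrite !Rint1.
Qed.

Lemma cint_sum (I : finType) (al : I -> C) (w : I -> R) :
  ((\int[Q]_t complex.Re (\sum_i al i * expiR (w i * t))) +i*
   (\int[Q]_t complex.Im (\sum_i al i * expiR (w i * t))))%C =
  \sum_i al i * ch (w i).
Proof.
apply/eqP; rewrite eq_complex /= Re_sum Im_sum; apply/andP; split; apply/eqP.
- under eq_Rintegral do rewrite Re_sum.
  under eq_Rintegral do under eq_bigr do rewrite ReM Re_expiR Im_expiR.
  have [_ ->] := Rint_sum (f := fun i t => complex.Re (al i) * cos (w i * t) - complex.Im (al i) * sin (w i * t))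
      (index_enum I)
      (fun i => intgB (intgZ _ (intg_cos _)) (intgZ _ (intg_sin _))).
  apply: eq_bigr => i _.
  rewrite RintegralB //; last 2 first.
    exact: (intgZ _ (intg_cos _)).
    exact: (intgZ _ (intg_sin _)).
  by rewrite RintegralZl ?RintegralZl ?ReM //; [exact: intg_sin | exact: intg_cos].
- under eq_Rintegral do rewrite Im_sum.
  under eq_Rintegral do under eq_bigr do rewrite ImM Re_expiR Im_expiR.
  have [_ ->] := Rint_sum (f := fun i t => complex.Re (al i) * sin (w i * t) + complex.Im (al i) * cos (w i * t))
      (index_enum I)
      (fun i => intgD (intgZ _ (intg_sin _)) (intgZ _ (intg_cos _))).
  apply: eq_bigr => i _.
  rewrite RintegralD //; last 2 first.
    exact: (intgZ _ (intg_sin _)).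
    exact: (intgZ _ (intg_cos _)).
  by rewrite RintegralZl ?RintegralZl ?ImM //; [exact: intg_cos | exact: intg_sin].
Qed.

End Integ.

Lemma sigmaS_Kmx (R : realType) n (U : 'M[R[i]]_n) E rho (Q : probability R R) :
  qunitary U -> sigmaS U E rho Q = Kmx U rho (fun a b => ch Q (E b - E a)).
Proof.
move=> hU; apply/matrixP => j k; rewrite /sigmaS mxE.
under eq_Rintegral do rewrite (rotH_Kmx _ _ hU) Kmx_entry pair_bigA /=.
under [X in (_ +i* X)%C]eq_Rintegral do rewrite (rotH_Kmx _ _ hU) Kmx_entry pair_bigA /=.
rewrite (cint_sum Q (fun p : 'I_n * 'I_n => U j p.2 * Mr U rho p.2 p.1 * dagger U p.1 k)
   (fun p => E p.1 - E p.2)).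
by rewrite Kmx_entry pair_bigA.
Qed.

Section CCvg.
Variable R : realType.
Local Notation C := R[i].

Definition ccvg (u : nat -> C) (l : C) : Prop :=
  (complex.Re (u k) @[k --> \oo] --> complex.Re l) /\
  (complex.Im (u k) @[k --> \oo] --> complex.Im l).

Lemma cvg_sumR (I : Type) (r : seq I) (u : I -> nat -> R) (a : I -> R) :
  (forall i, u i k @[k --> \oo] --> a i) ->
  \sum_(i <- r) u i k @[k --> \oo] --> \sum_(i <- r) a i.
Proof.
move=> h; elim: r => [|i r IH].
  rewrite big_nil (_ : (fun k => \sum_(i <- [::]) u i k) = fun _ => 0).
    exact: cvg_cst.
  by apply: funext => k; rewrite big_nil.
rewrite big_cons (_ : (fun k => \sum_(j <- i :: r) u j k) =
   fun k => u i k + \sum_(j <- r) u j k); last first.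
  by apply: funext => k; rewrite big_cons.
exact: (cvgD (h i) IH).
Qed.

Lemma ccvg_cst c : ccvg (fun _ => c) c.
Proof. by split; exact: cvg_cst. Qed.

Lemma ccvgD u v a b : ccvg u a -> ccvg v b ->
  ccvg (fun k => u k + v k) (a + b).
Proof.
move=> [hu1 hu2] [hv1 hv2]; split.
  rewrite ReD (_ : (fun k => complex.Re (u k + v k)) =
    fun k => complex.Re (u k) + complex.Re (v k)); last first.
    by apply: funext => k; rewrite ReD.
  exact: (cvgD hu1 hv1).
rewrite ImD (_ : (fun k => complex.Im (u k + v k)) =
  fun k => complex.Im (u k) + complex.Im (v k)); last first.
  by apply: funext => k; rewrite ImD.
exact: (cvgD hu2 hv2).
Qed.

Lemma ccvgM u v a b : ccvg u a -> ccvg v b ->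
  ccvg (fun k => u k * v k) (a * b).
Proof.
move=> [hu1 hu2] [hv1 hv2]; split.
  rewrite ReM (_ : (fun k => complex.Re (u k * v k)) =
    fun k => complex.Re (u k) * complex.Re (v k) - complex.Im (u k) * complex.Im (v k)); last first.
    by apply: funext => k; rewrite ReM.
  exact: (cvgB (cvgM hu1 hv1) (cvgM hu2 hv2)).
rewrite ImM (_ : (fun k => complex.Im (u k * v k)) =
  fun k => complex.Re (u k) * complex.Im (v k) + complex.Im (u k) * complex.Re (v k)); last first.
  by apply: funext => k; rewrite ImM.
exact: (cvgD (cvgM hu1 hv2) (cvgM hu2 hv1)).
Qed.

Lemma ccvg_sum (I : Type) (r : seq I) (u : I -> nat -> C) (a : I -> C) :
  (forall i, ccvg (u i) (a i)) ->
  ccvg (fun k => \sum_(i <- r) u i k) (\sum_(i <- r) a i).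
Proof.
move=> h; split.
  rewrite Re_sum (_ : (fun k => complex.Re (\sum_(i <- r) u i k)) =
    fun k => \sum_(i <- r) complex.Re (u i k)); last first.
    by apply: funext => k; rewrite Re_sum.
  by apply: cvg_sumR => i; case: (h i).
rewrite Im_sum (_ : (fun k => complex.Im (\sum_(i <- r) u i k)) =
  fun k => \sum_(i <- r) complex.Im (u i k)); last first.
  by apply: funext => k; rewrite Im_sum.
by apply: cvg_sumR => i; case: (h i).
Qed.

Lemma Kmx_ccvg n (U rho : 'M[C]_n) (ck : nat -> 'I_n -> 'I_n -> C)
  (c : 'I_n -> 'I_n -> C) :
  (forall a b, ccvg (fun k => ck k a b) (c a b)) ->
  forall j k, ccvg (fun t => Kmx U rho (ck t) j k) (Kmx U rho c j k).
Proof.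
move=> h j k; rewrite Kmx_entry (_ : (fun t => Kmx U rho (ck t) j k) =
  fun t => \sum_b \sum_a (U j a * Mr U rho a b * dagger U b k) * ck t a b); last first.
  by apply: funext => t; rewrite Kmx_entry.
apply: ccvg_sum => b; apply: ccvg_sum => a.
exact: (ccvgM (ccvg_cst _) (h a b)).
Qed.

End CCvg.

Section Erg.
Variable R : realType.
Local Notation C := R[i].

Definition nu (z : C) : R := `|complex.Re z| + `|complex.Im z|.

Lemma nu_ge0 z : 0 <= nu z.
Proof. by rewrite /nu addr_ge0. Qed.
Lemma nuD x y : nu (x + y) <= nu x + nu y.
Proof.
rewrite /nu ReD ImD.
have h1 := ler_normD (complex.Re x) (complex.Re y).
have h2 := ler_normD (complex.Im x) (complex.Im y).
lra.
Qed.
Lemma nuN x : nu (- x) = nu x.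
Proof. by rewrite /nu ReN ImN !normrN. Qed.
Lemma nuJ x : nu (x^*%C) = nu x.
Proof. by rewrite /nu ReJ ImJ normrN. Qed.
Lemma nuM x y : nu (x * y) <= nu x * nu y.
Proof.
rewrite /nu ReM ImM.
have h1 := ler_normB (complex.Re x * complex.Re y) (complex.Im x * complex.Im y).
have h2 := ler_normD (complex.Re x * complex.Im y) (complex.Im x * complex.Re y).
rewrite !normrM in h1 h2.
set a := `|complex.Re x| in h1 h2 *; set b := `|complex.Im x| in h1 h2 *.
set c := `|complex.Re y| in h1 h2 *; set d := `|complex.Im y| in h1 h2 *.
rewrite mulrDl !mulrDr; lra.
Qed.
Lemma nu_sum (I : Type) (r : seq I) (F : I -> C) :
  nu (\sum_(i <- r) F i) <= \sum_(i <- r) nu (F i).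
Proof.
elim: r => [|i r IH]; first by rewrite !big_nil /nu normr0 addr0.
rewrite !big_cons; apply: (le_trans (nuD _ _)); exact: lerD.
Qed.
Lemma Re_le_nu z : `|complex.Re z| <= nu z.
Proof. by rewrite /nu lerDl. Qed.

Lemma le_sum_term (I : finType) (F : I -> R) i :
  (forall j, 0 <= F j) -> F i <= \sum_j F j.
Proof. by move=> h; rewrite (bigD1 i) //= lerDl sumr_ge0. Qed.

Lemma unitary_entry p (W : 'M[C]_p) i j : qunitary W -> nu (W i j) <= 2.
Proof.
move=> hW.
have e : complex.Re ((dagger W *m W) j j) = 1 by rewrite hW mxE eqxx.
rewrite mxE Re_sum in e.
have : complex.Re (dagger W j i * W i j) <= 1.
  rewrite -e; apply: (le_sum_term (F := fun k => complex.Re (dagger W j k * W k j))).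
  move=> k; rewrite /dagger !mxE ReM ReJ ImJ.
  have := sqr_ge0 (complex.Re (W k j)); have := sqr_ge0 (complex.Im (W k j)).
  rewrite !expr2; lra.
rewrite /dagger !mxE ReM ReJ ImJ => h.
rewrite /nu.
have ha := normr_ge0 (complex.Re (W i j)); have hb := normr_ge0 (complex.Im (W i j)).
have ea : `|complex.Re (W i j)| ^+ 2 = complex.Re (W i j) ^+ 2 by rewrite real_normK // num_real.
have eb : `|complex.Im (W i j)| ^+ 2 = complex.Im (W i j) ^+ 2 by rewrite real_normK // num_real.
rewrite !expr2 in ea eb.
have s1 := sqr_ge0 (complex.Re (W i j)); have s2 := sqr_ge0 (complex.Im (W i j)).
rewrite !expr2 in s1 s2.
have r1 : `|complex.Re (W i j)| <= 1 by nra.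
have r2 : `|complex.Im (W i j)| <= 1 by nra.
lra.
Qed.

Variable N : nat.
Variable H : 'M[C]_N.

Definition gW (W X : 'M[C]_N) : R :=
  complex.Re (\tr ((H - dagger W *m H *m W) *m X)).
Definition ergS (X : 'M[C]_N) := [set x : R | exists W, qunitary W /\ x = gW W X].
Lemma ergE X : ergotropy H X = sup (ergS X). Proof. by []. Qed.

Definition hH := \sum_i \sum_j nu (H i j).
Definition dd (X : 'M[C]_N) := \sum_i \sum_j nu (X j i).
Definition Kc := 5 * hH.

Lemma hH_ge0 : 0 <= hH.
Proof. by apply: sumr_ge0 => i _; apply: sumr_ge0 => j _; exact: nu_ge0. Qed.
Lemma dd_ge0 X : 0 <= dd X.
Proof. by apply: sumr_ge0 => i _; apply: sumr_ge0 => j _; exact: nu_ge0. Qed.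

Lemma nuH i j : nu (H i j) <= hH.
Proof.
apply: (le_trans (le_sum_term (F := fun j => nu (H i j)) j _)); first by move=> k; exact: nu_ge0.
apply: (le_sum_term (F := fun i => \sum_j nu (H i j))).
by move=> k; apply: sumr_ge0 => l _; exact: nu_ge0.
Qed.

Lemma nu_WHW W i j : qunitary W -> nu ((dagger W *m H *m W) i j) <= 4 * hH.
Proof.
move=> hW; rewrite mxE; apply: (le_trans (nu_sum _ _)).
rewrite /hH exchange_big mulr_sumr; apply: ler_sum => l _.
rewrite mxE mulr_suml; apply: (le_trans (nu_sum _ _)); rewrite mulr_sumr.
apply: ler_sum => k _.
apply: (le_trans (nuM _ _)); apply: (le_trans (ler_wpM2r (nu_ge0 _) (nuM _ _))).
have h1 : nu (dagger W i k) <= 2 by rewrite /dagger !mxE nuJ; exact: unitary_entry.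
have h2 : nu (W l j) <= 2 by exact: unitary_entry.
have g1 := nu_ge0 (dagger W i k); have g2 := nu_ge0 (H k l); have g3 := nu_ge0 (W l j).
apply: (le_trans (ler_pM _ _ (ler_wpM2r g2 h1) h2)).
- exact: mulr_ge0.
- exact: g3.
- lra.
Qed.

Lemma gW_bound W X : qunitary W -> `|gW W X| <= Kc * dd X.
Proof.
move=> hW; apply: (le_trans (Re_le_nu _)).
rewrite /mxtrace; apply: (le_trans (nu_sum _ _)).
rewrite /dd mulr_sumr; apply: ler_sum => i _.
rewrite mxE; apply: (le_trans (nu_sum _ _)).
rewrite mulr_sumr; apply: ler_sum => j _.
apply: (le_trans (nuM _ _)); apply: ler_wpM2r; first exact: nu_ge0.
have -> : (H - dagger W *m H *m W) i j = H i j - (dagger W *m H *m W) i j.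
  by rewrite !mxE.
apply: (le_trans (nuD _ _)); rewrite nuN.
have := nuH i j; have := nu_WHW i j hW; rewrite /Kc; lra.
Qed.

Lemma gWB W X Y : gW W (X - Y) = gW W X - gW W Y.
Proof. by rewrite /gW mulmxBr linearB ReB. Qed.
Lemma gWD W X Y : gW W (X + Y) = gW W X + gW W Y.
Proof. by rewrite /gW mulmxDr mxtraceD ReD. Qed.
Lemma gWZ W a X : gW W (a%:C%C *: X) = a * gW W X.
Proof. by rewrite /gW -scalemxAr mxtraceZ ReRC. Qed.

Lemma qunitary1 : qunitary (1%:M : 'M[C]_N).
Proof. by rewrite /qunitary dagger1 mul1mx. Qed.

Lemma ergS_ne X : ergS X !=set0.
Proof. by exists (gW 1%:M X); exists 1%:M; split => //; exact: qunitary1. Qed.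

Lemma ergS_ub X : has_ubound (ergS X).
Proof.
exists (Kc * dd X) => x [W [hW ->]].
exact: (le_trans (ler_norm _) (gW_bound X hW)).
Qed.

Lemma erg_ge W X : qunitary W -> gW W X <= ergotropy H X.
Proof. by move=> hW; rewrite ergE; apply: ub_le_sup; [exact: ergS_ub | exists W]. Qed.

Lemma erg_le X c : (forall W, qunitary W -> gW W X <= c) -> ergotropy H X <= c.
Proof.
move=> h; rewrite ergE; apply: ge_sup; first exact: ergS_ne.
by move=> x [W [hW ->]]; exact: h.
Qed.

Lemma erg_lip X Y : ergotropy H X <= ergotropy H Y + Kc * dd (X - Y).
Proof.
apply: erg_le => W hW.
have e : gW W X = gW W Y + gW W (X - Y) by rewrite gWB; ring.
rewrite e; apply: lerD; first exact: erg_ge.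
exact: (le_trans (ler_norm _) (gW_bound _ hW)).
Qed.

Lemma ddN X Y : dd (X - Y) = dd (Y - X).
Proof.
rewrite /dd; apply: eq_bigr => i _; apply: eq_bigr => j _.
by rewrite !mxE -nuN opprB.
Qed.

Lemma erg_mid X Y :
  ergotropy H ((2^-1)%:C%C *: (X + Y)) <= (ergotropy H X + ergotropy H Y) / 2.
Proof.
apply: erg_le => W hW; rewrite gWZ gWD.
have := erg_ge X hW; have := erg_ge Y hW; lra.
Qed.

Lemma gW_conj V W X : dagger V *m H *m V = H ->
  gW W (V *m X *m dagger V) = gW (W *m V) X.
Proof.
move=> hV; rewrite /gW !mulmxA mxtrace_mulC !mulmxA mulmxBr mulmxBl hV.
by rewrite !dagger_mul !mulmxA.
Qed.

Lemma erg_inv V X : qunitary V -> dagger V *m H *m V = H ->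
  ergotropy H (V *m X *m dagger V) = ergotropy H X.
Proof.
move=> hV hVH; have VVd := unitary_sym hV.
rewrite !ergE; congr sup; apply/seteqP; split => x [W [hW ->]].
- exists (W *m V); split; last exact: gW_conj.
  rewrite /qunitary dagger_mul -mulmxA (mulmxA (dagger W)) hW mul1mx; exact: hV.
- exists (W *m dagger V); split.
    rewrite /qunitary dagger_mul daggerK -mulmxA (mulmxA (dagger W)) hW mul1mx.
    exact: VVd.
  by rewrite gW_conj // -mulmxA hV mulmx1.
Qed.

End Erg.

Lemma erg_cont (R : realType) N (H : 'M[R[i]]_N) (Xk : nat -> 'M[R[i]]_N) (X : 'M[R[i]]_N) :
  (forall i j, ccvg (fun k => Xk k i j) (X i j)) ->
  ergotropy H (Xk k) @[k --> \oo] --> ergotropy H X.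
Proof.
move=> h.
have hd : dd (Xk k - X) @[k --> \oo] --> (0 : R).
  rewrite (_ : (fun k => dd (Xk k - X)) = fun k => \sum_i \sum_j
     (`|complex.Re (Xk k j i) - complex.Re (X j i)| +
      `|complex.Im (Xk k j i) - complex.Im (X j i)|)); last first.
    apply: funext => k; rewrite /dd; apply: eq_bigr => i _; apply: eq_bigr => j _.
    by rewrite !mxE /nu ReB ImB.
  have L : \sum_(i : 'I_N) \sum_(j : 'I_N)
     (`|complex.Re (X j i) - complex.Re (X j i)| +
      `|complex.Im (X j i) - complex.Im (X j i)|) = 0.
    by rewrite big1 // => i _; rewrite big1 // => j _; rewrite !subrr normr0 addr0.
  rewrite -[X in _ --> X]L; apply: cvg_sumR => i; apply: cvg_sumR => j.
  case: (h j i) => h1 h2.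
  have g1 : `|complex.Re (Xk k j i) - complex.Re (X j i)| @[k --> \oo] -->
     `|complex.Re (X j i) - complex.Re (X j i)|.
    exact: (cvg_norm (cvgB h1 (cvg_cst (complex.Re (X j i))))).
  have g2 : `|complex.Im (Xk k j i) - complex.Im (X j i)| @[k --> \oo] -->
     `|complex.Im (X j i) - complex.Im (X j i)|.
    exact: (cvg_norm (cvgB h2 (cvg_cst (complex.Im (X j i))))).
  exact: (cvgD g1 g2).
have hK : Kc H * dd (Xk k - X) @[k --> \oo] --> (0 : R).
  by rewrite -(mulr0 (Kc H)); exact: (cvgM (cvg_cst (Kc H)) hd).
apply/cvgrPdist_le => e e0.
move/cvgrPdist_le : hK => /(_ e e0); apply: filterS => k /= hk.
have l1 := erg_lip H (Xk k) X.
have l2 := erg_lip H X (Xk k).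
rewrite ddN in l2.
rewrite sub0r normrN ger0_norm in hk; last first.
  by apply: mulr_ge0; [rewrite /Kc mulr_ge0 // hH_ge0 | exact: dd_ge0].
rewrite ler_norml; apply/andP; split; lra.
Qed.

Section Tens.
Variable R : realType.
Local Notation C := R[i].
Variables (n m : nat) (U : 'M[C]_n) (E : 'I_n -> R) (HB : 'M[C]_m) (T : 'M[C]_m).
Hypothesis hU : qunitary U.

Local Notation HT := (totalH (specH U E) HB).

Definition unimod (s : 'I_n -> C) := forall a, (s a)^*%C * s a = 1.

Lemma Vt_unitary s : unimod s -> qunitary (Dg U s *t (1%:M : 'M[C]_m)).
Proof.
move=> h; rewrite /qunitary dagger_tens tensmx_mul dagger1 mul1mx.
by rewrite (Dg_unitary hU h) tens11.
Qed.

Lemma Vt_comm s : unimod s ->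
  dagger (Dg U s *t (1%:M : 'M[C]_m)) *m HT *m (Dg U s *t 1%:M) = HT.
Proof.
move=> h; rewrite /totalH dagger_tens dagger1 mulmxDr mulmxDl !tensmx_mul.
rewrite !mulmx1 !mul1mx (Dg_comm E hU h).
by rewrite (Dg_unitary hU h).
Qed.

Lemma Vt_conj s (X : 'M[C]_n) :
  (Dg U s *t (1%:M : 'M[C]_m)) *m (X *t T) *m dagger (Dg U s *t (1%:M : 'M[C]_m)) =
  (Dg U s *m X *m dagger (Dg U s)) *t T.
Proof. by rewrite dagger_tens dagger1 !tensmx_mul mulmx1 mul1mx. Qed.

Lemma erg_rot s (X : 'M[C]_n) : unimod s ->
  ergotropy HT ((Dg U s *m X *m dagger (Dg U s)) *t T) = ergotropy HT (X *t T).
Proof.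
move=> h; rewrite -Vt_conj erg_inv //; [exact: Vt_unitary | exact: Vt_comm].
Qed.

Lemma tens_ccvg (Xk : nat -> 'M[C]_n) (X : 'M[C]_n) :
  (forall i j, ccvg (fun k => Xk k i j) (X i j)) ->
  forall i j, ccvg (fun k => (Xk k *t T) i j) ((X *t T) i j).
Proof.
move=> h i j; rewrite [X in ccvg _ X]mxE.
rewrite (_ : (fun k => (Xk k *t T) i j) = fun k =>
  Xk k (mxtens_unindex i).1 (mxtens_unindex j).1 * T (mxtens_unindex i).2 (mxtens_unindex j).2).
  exact: (ccvgM (h _ _) (ccvg_cst _)).
by apply: funext => k; rewrite mxE.
Qed.

Lemma erg_cont_tens (Xk : nat -> 'M[C]_n) (X : 'M[C]_n) :
  (forall i j, ccvg (fun k => Xk k i j) (X i j)) ->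
  ergotropy HT (Xk k *t T) @[k --> \oo] --> ergotropy HT (X *t T).
Proof. by move=> h; apply: erg_cont; exact: tens_ccvg. Qed.

Variable rho : 'M[C]_n.
Variable Q : probability R R.

Definition mk (r : seq 'I_n) a b := all (fun l => (E a == E l) == (E b == E l)) r.
Definition cm (r : seq 'I_n) a b := if mk r a b then ch Q (E b - E a) else 0.
Definition sg (l : 'I_n) (a : 'I_n) : C := if E a == E l then -1 else 1.

Lemma sg_unimod l : unimod (sg l).
Proof.
move=> a; rewrite /sg; case: ifP => _.
  by rewrite rmorphN1 mulN1r opprK.
by rewrite conjc1 mul1r.
Qed.

Lemma half2 : (2^-1)%:C%C * 2 = 1 :> C.
Proof.
apply/eqP; rewrite eq_complex /=; apply/andP; split; apply/eqP; lra.
Qed.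
Lemma cm_step l r :
  Kmx U rho (cm (l :: r)) =
  (2^-1)%:C%C *: (Kmx U rho (cm r) +
     Dg U (sg l) *m Kmx U rho (cm r) *m dagger (Dg U (sg l))).
Proof.
rewrite (Dg_conj rho hU) Kmx_mid; congr Kmx.
apply: funext => a; apply: funext => b.
rewrite /cm /mk /sg /=.
have hh : forall c : C, c = (2^-1)%:C%C * (c + c).
  by move=> c; rewrite -[c + c]mulr2n -[c *+ 2]mulr_natl mulrA half2 mul1r.
case: (all _ r); rewrite ?andbF ?andbT /=; last first.
  by rewrite !mulr0 !mul0r addr0 mulr0.
rewrite (fun_if (@conjc R)) rmorphN1 conjc1.
move: (ch Q (E b - E a)) => c.
case: (E a == E l); case: (E b == E l) => /=;
  rewrite ?mulN1r ?mulrN1 ?opprK ?mul1r ?mulr1 ?addrN ?mulr0 //; exact: hh.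
Qed.

Lemma half_double (x : R) : (x + x) / 2 = x.
Proof. lra. Qed.

Lemma erg_step s (X Y : 'M[C]_n) : unimod s ->
  X = (2^-1)%:C%C *: (Y + Dg U s *m Y *m dagger (Dg U s)) ->
  ergotropy HT (X *t T) <= ergotropy HT (Y *t T).
Proof.
move=> h ->; rewrite tensZl tensDl.
apply: (le_trans (erg_mid _ _ _)).
by rewrite erg_rot // half_double.
Qed.

Lemma cm_chain r :
  ergotropy HT (Kmx U rho (cm r) *t T) <= ergotropy HT (Kmx U rho (cm [::]) *t T).
Proof.
elim: r => [|l r IH]; first exact: lexx.
apply: le_trans IH.
exact: (erg_step (sg_unimod l) (cm_step l r)).
Qed.

Lemma cm_nil E' : E' = E -> Kmx U rho (cm [::]) = sigmaS U E' rho Q.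
Proof. by move=> ->; rewrite sigmaS_Kmx. Qed.

Lemma cm_all : Kmx U rho (cm (enum 'I_n)) = dephase U E rho.
Proof.
rewrite dephase_Kmx; congr Kmx.
apply: funext => a; apply: funext => b.
rewrite /cm.
have -> : mk (enum 'I_n) a b = (E a == E b).
  apply/allP/eqP => [h|e l _]; last by rewrite e eqxx.
  have := h a; rewrite mem_enum eqxx => /(_ isT).
  by rewrite eq_sym eqb_id => /eqP ->.
case: eqP => [->|_]; last by [].
by rewrite subrr ch0.
Qed.

End Tens.

Unset Implicit Arguments.
Set Strict Implicit.

Theorem mainTheorem4 (R : realType) (n m : nat)
  (HS : 'M[R[i]]_n) (U : 'M[R[i]]_n) (E : 'I_n -> R)
  (HB : 'M[R[i]]_m) (V : 'M[R[i]]_m) (F : 'I_m -> R) (beta : R)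
  (rhoS : 'M[R[i]]_n) :
  qunitary U -> HS = specH U E ->
  qunitary V -> HB = specH V F -> 0 < beta ->
  density rhoS ->
  let tau := gibbs V F beta in
  let H := totalH HS HB in
  (* weight tends to a time state |t0><t0| *)
  (forall (P : nat -> probability R R) (t0 : R),
     tends_to_time_state P t0 ->
     mx_cvg (fun k => sigmaS U E rhoS (P k)) (rotH U E t0 rhoS) /\
     (lockedE HS U E HB tau rhoS (P k) @[k --> \oo] --> 0)) /\
  (* weight tends to an energy eigenstate |eps><eps| *)
  (forall P : nat -> probability R R,
     tends_to_energy_state P ->
     mx_cvg (fun k => sigmaS U E rhoS (P k)) (dephase U E rhoS) /\
     (lockedE HS U E HB tau rhoS (P k) @[k --> \oo] -->
        ergotropy H (rhoS *t tau) - ergotropy H (dephase U E rhoS *t tau)) /\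
     (* ... and this limiting value is the maximal locked energy *)
     (forall Q : probability R R,
        lockedE HS U E HB tau rhoS Q <=
        ergotropy H (rhoS *t tau) - ergotropy H (dephase U E rhoS *t tau))).
Proof.
move=> hU hHS _ _ _ _; subst HS => tau H.
split.
- move=> P t0 hP.
  have hS : forall i j, ccvg (fun k => sigmaS U E rhoS (P k) i j) (rotH U E t0 rhoS i j).
    move=> i j.
    rewrite (_ : (fun k => sigmaS U E rhoS (P k) i j) =
       fun k => Kmx U rhoS (fun a b => ch (P k) (E b - E a)) i j); last first.
      by apply: funext => k; rewrite (sigmaS_Kmx _ _ _ hU).
    rewrite (rotH_Kmx _ _ hU); apply: Kmx_ccvg => a b.
    have bc : exists M : R, forall x, `|cos ((E b - E a) * x)| <= M.
      by exists 1 => x; exact: cos_max.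
    have bs : exists M : R, forall x, `|sin ((E b - E a) * x)| <= M.
      by exists 1 => x; exact: sin_max.
    split.
    + exact: (hP (fun t => cos ((E b - E a) * t)) (@cosw_cont R (E b - E a)) bc).
    + exact: (hP (fun t => sin ((E b - E a) * t)) (@sinw_cont R (E b - E a)) bs).
  split; first by move=> i j; exact: hS.
  have hr : ergotropy H (rotH U E t0 rhoS *t tau) = ergotropy H (rhoS *t tau).
    rewrite /rotH evol_Dg.
    apply: (erg_rot E HB tau hU rhoS) => a; exact: expiR_norm.
  have hE : ergotropy H (sigmaS U E rhoS (P k) *t tau) @[k --> \oo] -->
            ergotropy H (rhoS *t tau).
    rewrite -hr; exact: (erg_cont_tens hS).
  rewrite /lockedE -(subrr (ergotropy H (rhoS *t tau))).
  exact: (cvgB (cvg_cst _) hE).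
- move=> P hP.
  have hS : forall i j, ccvg (fun k => sigmaS U E rhoS (P k) i j) (dephase U E rhoS i j).
    move=> i j.
    rewrite (_ : (fun k => sigmaS U E rhoS (P k) i j) =
       fun k => Kmx U rhoS (fun a b => ch (P k) (E b - E a)) i j); last first.
      by apply: funext => k; rewrite (sigmaS_Kmx _ _ _ hU).
    rewrite dephase_Kmx; apply: Kmx_ccvg => a b.
    case: (eqVneq (E a) (E b)) => [e|ne].
      rewrite e ?eqxx (_ : (fun k => ch (P k) (E b - E b)) = fun _ => 1).
        exact: ccvg_cst.
      by apply: funext => k; rewrite subrr ch0.
    rewrite ?(negbTE ne).
    have w0 : E b - E a != 0 by rewrite subr_eq0 eq_sym.
    have [h1 h2] := hP _ w0.
    by split; [exact: h1 | exact: h2].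
  split; first by move=> i j; exact: hS.
  split.
    have hE : ergotropy H (sigmaS U E rhoS (P k) *t tau) @[k --> \oo] -->
              ergotropy H (dephase U E rhoS *t tau).
      exact: (erg_cont_tens hS).
    rewrite /lockedE; exact: (cvgB (cvg_cst _) hE).
  move=> Q.
  suff h : ergotropy H (dephase U E rhoS *t tau) <=
           ergotropy H (sigmaS U E rhoS Q *t tau).
    by rewrite /lockedE lerD2l lerN2.
  have h1 := cm_chain E HB tau hU rhoS Q (enum 'I_n).
  have e1 := cm_all U E rhoS Q.
  have e2 := cm_nil hU rhoS Q (erefl E).
  rewrite -e1 -e2; exact: h1.
Qed.
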